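(* Let $1\leq p<q$ be integers and let $G=\langle a,t\mid ta^pt^{-1}=a^q\rangle$ be the Baumslag--Solitar group $BS(p,q)$. Every element $x\in G$ can be written uniquely as $x=w(a,t)a^N$, where $N\in\mathbb Z$ and $w(a,t)$ is a freely reduced word belonging to $\{t,at,\ldots,a^{q-1}t,\,t^{-1},at^{-1},\ldots,a^{p-1}t^{-1}\}^*$. There exist constants $C_1,C_2,D_1,D_2>0$ such that for every $x\in G$ with this normal form $x=w(a,t)a^N$, $$C_1\bigl(|w|+\log(|N|+1)\bigr)-D_1\leq \|x\|\leq C_2\bigl(|w|+\log(|N|+1)\bigr)+D_2,$$ where $|w|$ is the number of letters of $w$ as a word over $\{a^{\pm1},t^{\pm1}\}$ and $\|x\|$ is the word length of $x$ with respect to the generating set $\{a,t\}$.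
   Context: $X^*$ denotes the set of finite concatenations of words from $X$. The base of the logarithm is any fixed base greater than $1$. *)

(* Defs.v *)
(* Baumslag--Solitar group BS(p,q) = <a,t | t a^p t^-1 = a^q>,
   modelled as words over {a, a^-1, t, t^-1} modulo the congruence generated
   by free cancellation and the defining relator. *)
From Stdlib Require Import Reals Lia List ZArith ClassicalEpsilon.
Import ListNotations.
Open Scope R_scope.

Inductive letter : Type := A | Ai | T | Ti.

Definition word := list letter.

Inductive bs_eq (p q : nat) : word -> word -> Prop :=
| bs_refl : forall u, bs_eq p q u u
| bs_sym : forall u v, bs_eq p q u v -> bs_eq p q v u
| bs_trans : forall u v w, bs_eq p q u v -> bs_eq p q v w -> bs_eq p q u w
| bs_ctx : forall l r u v, bs_eq p q u v -> bs_eq p q (l ++ u ++ r) (l ++ v ++ r)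
| bs_cancel_a : bs_eq p q [A; Ai] []
| bs_cancel_ai : bs_eq p q [Ai; A] []
| bs_cancel_t : bs_eq p q [T; Ti] []
| bs_cancel_ti : bs_eq p q [Ti; T] []
| bs_rel : bs_eq p q ([T] ++ repeat A p ++ [Ti]) (repeat A q).

Definition is_word_length (p q : nat) (u : word) (n : nat) : Prop :=
  (exists v, bs_eq p q u v /\ length v = n) /\
  (forall v, bs_eq p q u v -> (n <= length v)%nat).

(* ||u||: the word length of the element represented by u (it exists and is
   unique, as a minimum of a nonempty set of naturals) *)
Definition wlen (p q : nat) (u : word) : nat :=
  epsilon (inhabits 0%nat) (fun n => is_word_length p q u n).

Definition apow (N : Z) : word :=
  if (0 <=? N)%Z then repeat A (Z.to_nat N) else repeat Ai (Z.to_nat (- N)).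

Definition block : Type := (bool * nat)%type.

Definition block_word (b : block) : word :=
  match b with
  | (true, i) => repeat A i ++ [T]
  | (false, i) => repeat A i ++ [Ti]
  end.

Definition blocks_word (bs : list block) : word := concat (map block_word bs).

Definition block_ok (p q : nat) (b : block) : Prop :=
  match b with
  | (true, i) => (i < q)%nat
  | (false, i) => (i < p)%nat
  end.

Definition inv_letter (x : letter) : letter :=
  match x with A => Ai | Ai => A | T => Ti | Ti => T end.

Definition freely_reduced (u : word) : Prop :=
  forall l r x y, u = l ++ x :: y :: r -> y <> inv_letter x.

Definition normal_blocks (p q : nat) (bs : list block) : Prop :=
  Forall (block_ok p q) bs /\ freely_reduced (blocks_word bs).

(* Main.v *)
Require Import Defs.
From Stdlib Require Import Reals List ZArith Lia Lra Setoid Morphisms ClassicalEpsilon Classical.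
Import ListNotations.

Open Scope R_scope.


Section BS.
Variables p q : nat.
Hypothesis hp : (1 <= p)%nat.
Hypothesis hpq : (p < q)%nat.

Notation "u =~ v" := (bs_eq p q u v) (at level 70).

Global Instance bs_equiv : Equivalence (bs_eq p q).
Proof. split. intro; apply bs_refl. intros x y; apply bs_sym. intros x y z; apply bs_trans. Qed.

Global Instance app_proper : Proper (bs_eq p q ==> bs_eq p q ==> bs_eq p q) (@app letter).
Proof.
  intros u u' Hu v v' Hv.
  transitivity (u' ++ v).
  - pose proof (bs_ctx p q [] v u u' Hu) as H. simpl in H. exact H.
  - pose proof (bs_ctx p q u' [] v v' Hv) as H. rewrite !app_nil_r in H. exact H.
Qed.

Global Instance cons_proper x : Proper (bs_eq p q ==> bs_eq p q) (cons x).
Proof. intros u v H. change (x :: u) with ([x] ++ u). change (x::v) with ([x]++v). now rewrite H. Qed.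

Lemma canc (x : letter) : [x; inv_letter x] =~ [].
Proof. destruct x; simpl; [apply bs_cancel_a|apply bs_cancel_ai|apply bs_cancel_t|apply bs_cancel_ti]. Qed.

Lemma canc' (x : letter) : [inv_letter x; x] =~ [].
Proof. destruct x; simpl; [apply bs_cancel_ai|apply bs_cancel_a|apply bs_cancel_ti|apply bs_cancel_t]. Qed.

Lemma apow_succ (n : Z) : apow n ++ [A] =~ apow (Z.succ n).
Proof.
  unfold apow. destruct (0 <=? n)%Z eqn:E; destruct (0 <=? Z.succ n)%Z eqn:E2;
  try (apply Z.leb_le in E); try (apply Z.leb_gt in E); try (apply Z.leb_le in E2); try (apply Z.leb_gt in E2); try lia.
  - replace (Z.to_nat (Z.succ n)) with (S (Z.to_nat n)) by lia.
    simpl (repeat _ (S _)). rewrite repeat_cons. reflexivity.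
  - assert (n = -1)%Z by lia. subst. simpl. apply (canc' A).
  - replace (Z.to_nat (- n)) with (S (Z.to_nat (- Z.succ n))) by lia.
    simpl (repeat _ (S _)). rewrite repeat_cons. rewrite <- app_assoc. simpl.
    rewrite (canc' A). now rewrite app_nil_r.
Qed.

Lemma apow_pred (n : Z) : apow n ++ [Ai] =~ apow (Z.pred n).
Proof.
  rewrite <- (Z.succ_pred n) at 1. rewrite <- apow_succ.
  rewrite <- app_assoc. simpl. rewrite (canc A). now rewrite app_nil_r.
Qed.

Lemma apow_add (m n : Z) : apow m ++ apow n =~ apow (m + n).
Proof.
  revert n. apply Z.peano_ind.
  - simpl. rewrite app_nil_r, Z.add_0_r. reflexivity.
  - intros n IH. rewrite <- apow_succ, app_assoc, IH, apow_succ.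
    now rewrite Z.add_succ_r.
  - intros n IH. rewrite <- apow_pred, app_assoc, IH, apow_pred.
    now rewrite Z.add_pred_r.
Qed.

Lemma apow_opp (n : Z) : apow n ++ apow (- n) =~ [].
Proof. rewrite apow_add. now rewrite Z.add_opp_diag_r. Qed.

Lemma apow_nat (n : nat) : apow (Z.of_nat n) = repeat A n.
Proof. unfold apow. destruct (0 <=? Z.of_nat n)%Z eqn:E. now rewrite Nat2Z.id.
  apply Z.leb_gt in E. lia. Qed.

Lemma relT : apow (Z.of_nat q) ++ [T] =~ [T] ++ apow (Z.of_nat p).
Proof.
  rewrite !apow_nat. rewrite <- (bs_rel p q).
  transitivity ([T] ++ repeat A p ++ ([Ti;T])). { rewrite <- !app_assoc. reflexivity. }
  rewrite (canc' T), app_nil_r. reflexivity.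
Qed.

Lemma conjT (k : Z) : apow (Z.of_nat q * k) ++ [T] =~ [T] ++ apow (Z.of_nat p * k).
Proof.
  revert k. apply Z.peano_ind.
  - rewrite !Z.mul_0_r. reflexivity.
  - intros k IH. rewrite !Z.mul_succ_r.
    rewrite <- apow_add, <- app_assoc, relT, app_assoc, IH, <- app_assoc, apow_add. reflexivity.
  - intros k IH. rewrite !Z.mul_pred_r.
    transitivity (apow (Z.of_nat q * k - Z.of_nat q) ++ [T] ++ (apow (Z.of_nat p) ++ apow (- Z.of_nat p))).
    { rewrite apow_opp, app_nil_r. reflexivity. }
    rewrite (app_assoc [T]), <- relT, !app_assoc, apow_add.
    replace (Z.of_nat q * k - Z.of_nat q + Z.of_nat q)%Z with (Z.of_nat q * k)%Z by ring.
    rewrite IH. rewrite <- app_assoc, apow_add. reflexivity.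
Qed.

Lemma conjTi (k : Z) : apow (Z.of_nat p * k) ++ [Ti] =~ [Ti] ++ apow (Z.of_nat q * k).
Proof.
  transitivity ([Ti;T] ++ apow (Z.of_nat p * k) ++ [Ti]).
  { rewrite (bs_cancel_ti p q). reflexivity. }
  change ([Ti;T] ++ apow (Z.of_nat p * k) ++ [Ti]) with ([Ti] ++ ([T] ++ apow (Z.of_nat p * k)) ++ [Ti]).
  rewrite <- conjT. rewrite <- !app_assoc. simpl. rewrite (bs_cancel_t p q). rewrite app_nil_r. reflexivity.
Qed.

Lemma conjT' (k : Z) : [T] ++ apow (Z.of_nat p * k) ++ [Ti] =~ apow (Z.of_nat q * k).
Proof. rewrite app_assoc, <- conjT, <- app_assoc. simpl. rewrite (bs_cancel_t p q), app_nil_r. reflexivity. Qed.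


Definition bnd (c : bool) : nat := if c then q else p.

Definition good (x y : block) : Prop := ~ (snd y = 0%nat /\ fst y <> fst x).

Fixpoint chain (R : block -> block -> Prop) (l : list block) : Prop :=
  match l with
  | [] => True
  | x :: t => match t with [] => True | y :: _ => R x y /\ chain R t end
  end.

Definition valid (rb : list block) : Prop :=
  Forall (block_ok p q) rb /\ chain (fun a b => good b a) rb.

Lemma block_ok_bnd (c : bool) (i : nat) : block_ok p q (c, i) <-> (i < bnd c)%nat.
Proof. destruct c; simpl; tauto. Qed.

Lemma valid_cons (y : block) (rb : list block) :
  valid (y :: rb) <-> block_ok p q y /\ valid rb /\ (match rb with [] => True | x :: _ => good x y end).
Proof.
  unfold valid. simpl. rewrite Forall_cons_iff. destruct rb; simpl; tauto.
Qed.

Definition gstep (c : bool) (s : list block * Z) : list block * Z :=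
  let m := Z.of_nat (bnd c) in let n := Z.of_nat (bnd (negb c)) in
  let k := (snd s / m)%Z in let i := (snd s mod m)%Z in
  match fst s with
  | (c', j) :: rb' =>
      if Bool.eqb c' c then ((c, Z.to_nat i) :: fst s, (n * k)%Z)
      else if (i =? 0)%Z then (rb', (Z.of_nat j + n * k)%Z)
      else ((c, Z.to_nat i) :: fst s, (n * k)%Z)
  | [] => ((c, Z.to_nat i) :: fst s, (n * k)%Z)
  end.

Definition act1 (x : letter) (s : list block * Z) : list block * Z :=
  match x with
  | A => (fst s, (snd s + 1)%Z)
  | Ai => (fst s, (snd s - 1)%Z)
  | T => gstep true s
  | Ti => gstep false s
  end.

Definition act_word (u : word) (s : list block * Z) : list block * Z :=
  fold_left (fun s x => act1 x s) u s.

Lemma act_word_app (u v : word) s : act_word (u ++ v) s = act_word v (act_word u s).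
Proof. unfold act_word. apply fold_left_app. Qed.

Lemma bnd_pos c : (0 < bnd c)%nat.
Proof. destruct c; simpl; lia. Qed.

Lemma divmod_spec (N m : Z) : (0 < m)%Z -> N = (m * (N / m) + N mod m)%Z /\ (0 <= N mod m < m)%Z.
Proof. intros. split. apply Z.div_mod. lia. apply Z.mod_pos_bound. lia. Qed.

Lemma divmod_uniq (N m k i : Z) : (0 <= i < m)%Z -> N = (m * k + i)%Z -> (N / m = k /\ N mod m = i)%Z.
Proof. intros. split. symmetry. eapply Z.div_unique_pos; eauto. symmetry. eapply Z.mod_unique_pos; eauto. Qed.

Lemma gstep_valid c s : valid (fst s) -> valid (fst (gstep c s)).
Proof.
  destruct s as [rb N]. intro V. unfold gstep. simpl in V |- *.
  pose proof (bnd_pos c) as Hc.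
  destruct (divmod_spec N (Z.of_nat (bnd c)) ltac:(lia)) as [E B].
  set (k := (N / Z.of_nat (bnd c))%Z) in *. set (i := (N mod Z.of_nat (bnd c))%Z) in *.
  assert (Hi : block_ok p q (c, Z.to_nat i)) by (apply block_ok_bnd; lia).
  destruct rb as [|[c' j] rb'].
  - simpl. apply valid_cons. split; [exact Hi|split; [exact V|exact I]].
  - destruct (Bool.eqb c' c) eqn:Ec.
    + apply Bool.eqb_prop in Ec. subst c'. simpl. apply valid_cons. split; [exact Hi|split; [exact V|]].
      unfold good; simpl; tauto.
    + destruct (i =? 0)%Z eqn:Ei.
      * simpl. apply valid_cons in V. tauto.
      * simpl. apply valid_cons. split; [exact Hi|split; [exact V|]]. unfold good; simpl.
        apply Z.eqb_neq in Ei. intros [H _]. lia.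
Qed.

Lemma act1_valid x s : valid (fst s) -> valid (fst (act1 x s)).
Proof. destruct x; simpl; auto; apply gstep_valid. Qed.

Lemma act_word_valid u s : valid (fst s) -> valid (fst (act_word u s)).
Proof. revert s. induction u; simpl; auto. intros s V. apply IHu. apply act1_valid. auto. Qed.

Lemma bnd_negb c : bnd (negb c) = bnd (negb c). Proof. reflexivity. Qed.

Lemma gstep_shift c rb N d : valid rb ->
  gstep (negb c) (fst (gstep c (rb, N)), (snd (gstep c (rb, N)) + Z.of_nat (bnd (negb c)) * d)%Z)
  = (rb, (N + Z.of_nat (bnd c) * d)%Z).
Proof.
  intro V. pose proof (bnd_pos c) as Hc. pose proof (bnd_pos (negb c)) as Hn.
  set (m := Z.of_nat (bnd c)) in *. set (n := Z.of_nat (bnd (negb c))) in *.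
  destruct (divmod_spec N m ltac:(lia)) as [E B].
  set (k := (N / m)%Z) in *. set (i := (N mod m)%Z) in *.
  assert (Hnn : bnd (negb (negb c)) = bnd c) by (destruct c; reflexivity).
  assert (Happ : forall rb0, gstep (negb c) ((c, Z.to_nat i) :: rb0, (n * k + n * d)%Z) = (rb0, (N + m * d)%Z)).
  { intro rb0. unfold gstep. simpl fst; simpl snd. rewrite Hnn. fold n. fold m.
    destruct (divmod_uniq (n * k + n * d) n (k + d) 0 ltac:(lia) ltac:(ring)) as [D1 D2].
    rewrite D1, D2. replace (Bool.eqb c (negb c)) with false by (destruct c; reflexivity).
    simpl. f_equal. rewrite Z2Nat.id by lia. rewrite E at 1. ring. }
  unfold gstep at 2 3. fold m n. fold k i.
  destruct rb as [|[c' j] rb'].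
  - simpl fst; simpl snd. apply Happ.
  - destruct (Bool.eqb c' c) eqn:Ec.
    + cbn [fst snd]. rewrite Ec. simpl fst; simpl snd. apply Happ.
    + cbn [fst snd]. rewrite Ec. fold k i. destruct (i =? 0)%Z eqn:Ei.
      * simpl fst; simpl snd. apply Z.eqb_eq in Ei.
        assert (c' = negb c) by (destruct c, c'; simpl in *; congruence). subst c'.
        apply valid_cons in V. destruct V as [Hj [V' Hg]]. apply block_ok_bnd in Hj.
        unfold gstep. simpl fst; simpl snd. rewrite Hnn. fold n m.
        destruct (divmod_uniq (Z.of_nat j + n * k + n * d) n (k + d) (Z.of_nat j) ltac:(lia) ltac:(ring)) as [D1 D2].
        rewrite D1, D2.
        destruct rb' as [|[c'' j''] rb''].
        -- simpl. rewrite Nat2Z.id. replace (N + m*d)%Z with (m*(k+d))%Z by (rewrite E, Ei; ring); reflexivity.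
        -- destruct (Bool.eqb c'' (negb c)) eqn:Ec2.
           ++ apply Bool.eqb_prop in Ec2. subst c''. simpl. rewrite Nat2Z.id. replace (N + m*d)%Z with (m*(k+d))%Z by (rewrite E, Ei; ring); reflexivity.
           ++ destruct (Z.of_nat j =? 0)%Z eqn:Ej.
              ** exfalso. apply Z.eqb_eq in Ej. apply Hg. simpl. split. lia.
                 destruct c, c''; simpl in *; congruence.
              ** simpl. rewrite Nat2Z.id. replace (N + m*d)%Z with (m*(k+d))%Z by (rewrite E, Ei; ring); reflexivity.
      * simpl fst; simpl snd. apply Happ.
Qed.

Lemma act_rep n rb N : act_word (repeat A n) (rb, N) = (rb, (N + Z.of_nat n)%Z).
Proof. revert N. induction n; intro N; simpl. f_equal; lia. rewrite IHn. f_equal; lia. Qed.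

Lemma act_repi n rb N : act_word (repeat Ai n) (rb, N) = (rb, (N - Z.of_nat n)%Z).
Proof. revert N. induction n; intro N; simpl. f_equal; lia. rewrite IHn. f_equal; lia. Qed.

Lemma act_apow M rb N : act_word (apow M) (rb, N) = (rb, (N + M)%Z).
Proof. unfold apow. destruct (0 <=? M)%Z eqn:E.
  - rewrite act_rep. apply Z.leb_le in E. f_equal. lia.
  - rewrite act_repi. apply Z.leb_gt in E. f_equal. lia. Qed.

Lemma gstep_inv c s : valid (fst s) -> gstep (negb c) (gstep c s) = s.
Proof.
  destruct s as [rb N]. intro V. pose proof (gstep_shift c rb N 0 V) as H.
  rewrite !Z.mul_0_r, !Z.add_0_r in H. rewrite <- surjective_pairing in H. exact H.
Qed.

Lemma act_resp u v : bs_eq p q u v -> forall s, valid (fst s) -> act_word u s = act_word v s.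
Proof.
  induction 1; intros s V.
  - reflexivity.
  - symmetry. auto.
  - rewrite IHbs_eq1 by auto. auto.
  - rewrite !act_word_app. rewrite IHbs_eq. reflexivity. apply act_word_valid. auto.
  - destruct s; simpl. f_equal; lia.
  - destruct s; simpl. f_equal; lia.
  - apply (gstep_inv true s V).
  - apply (gstep_inv false s V).
  - destruct s as [rb N]. rewrite !act_word_app. rewrite act_rep. simpl in V.
    pose proof (gstep_shift true rb N 1 V) as H. rewrite !Z.mul_1_r in H. simpl in H |- *.
    destruct (gstep true (rb, N)) as [a b]. simpl in H. rewrite act_rep. exact H.
Qed.

Definition tlet (c : bool) : letter := if c then T else Ti.

Lemma block_word_eq c i : block_word (c, i) = repeat A i ++ [tlet c].
Proof. destruct c; reflexivity. Qed.

Lemma blocks_word_app l1 l2 : blocks_word (l1 ++ l2) = blocks_word l1 ++ blocks_word l2.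
Proof. unfold blocks_word. rewrite map_app. apply concat_app. Qed.

Lemma blocks_word_single b : blocks_word [b] = block_word b.
Proof. unfold blocks_word. cbn [map concat]. apply app_nil_r. Qed.

Definition sw (s : list block * Z) : word := blocks_word (rev (fst s)) ++ apow (snd s).

Lemma conj_gen c k : bs_eq p q (apow (Z.of_nat (bnd c) * k) ++ [tlet c]) ([tlet c] ++ apow (Z.of_nat (bnd (negb c)) * k)).
Proof. destruct c; simpl. apply conjT. apply conjTi. Qed.

Lemma canc_gen c : bs_eq p q [tlet (negb c); tlet c] [].
Proof. destruct c; simpl. apply bs_cancel_ti. apply bs_cancel_t. Qed.

Lemma gstep_word c s : bs_eq p q (sw s ++ [tlet c]) (sw (gstep c s)).
Proof.
  destruct s as [rb N]. unfold sw, gstep. cbn [fst snd].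
  pose proof (bnd_pos c) as Hc. pose proof (bnd_pos (negb c)) as Hn.
  set (m := Z.of_nat (bnd c)) in *. set (n := Z.of_nat (bnd (negb c))) in *.
  destruct (divmod_spec N m ltac:(lia)) as [E B].
  set (k := (N / m)%Z) in *. set (i := (N mod m)%Z) in *.
  assert (Hw : bs_eq p q (blocks_word (rev rb) ++ apow N ++ [tlet c])
     (blocks_word (rev rb) ++ apow i ++ [tlet c] ++ apow (n * k))).
  { replace N with (i + m * k)%Z at 1 by lia. rewrite <- apow_add.
    transitivity (blocks_word (rev rb) ++ apow i ++ (apow (m * k) ++ [tlet c])).
    { rewrite <- !app_assoc. reflexivity. }
    unfold m. rewrite (conj_gen c k). reflexivity. }
  assert (Happ : bs_eq p q (blocks_word (rev rb) ++ apow N ++ [tlet c])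
      (blocks_word (rev ((c, Z.to_nat i) :: rb)) ++ apow (n * k))).
  { rewrite Hw. simpl rev. rewrite blocks_word_app.
    replace (blocks_word [(c, Z.to_nat i)]) with (repeat A (Z.to_nat i) ++ [tlet c])
      by (unfold blocks_word; cbn [map concat]; rewrite app_nil_r, block_word_eq; reflexivity).
    rewrite <- apow_nat, Z2Nat.id by lia. rewrite <- !app_assoc. reflexivity. }
  rewrite <- app_assoc.
  destruct rb as [|[c' j] rb'].
  - exact Happ.
  - destruct (Bool.eqb c' c) eqn:Ec. exact Happ.
    destruct (i =? 0)%Z eqn:Ei; [|exact Happ].
    apply Z.eqb_eq in Ei. rewrite Hw. rewrite Ei.
    assert (c' = negb c) by (destruct c, c'; simpl in *; congruence). subst c'.
    simpl rev. rewrite blocks_word_app.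
    rewrite blocks_word_single, block_word_eq.
    rewrite <- !app_assoc. simpl.
    transitivity (blocks_word (rev rb') ++ repeat A j ++ [tlet (negb c); tlet c] ++ apow (n * k)).
    { simpl. reflexivity. }
    rewrite canc_gen. simpl. rewrite <- apow_nat, apow_add. reflexivity.
Qed.

Lemma act1_word x s : bs_eq p q (sw s ++ [x]) (sw (act1 x s)).
Proof.
  destruct x.
  - destruct s as [rb N]. unfold sw; simpl. rewrite <- app_assoc, apow_succ. reflexivity.
  - destruct s as [rb N]. unfold sw; simpl. rewrite <- app_assoc, apow_pred. reflexivity.
  - apply (gstep_word true).
  - apply (gstep_word false).
Qed.

Lemma nf_correct u : bs_eq p q u (sw (act_word u ([], 0%Z))).
Proof.
  induction u using rev_ind.
  - reflexivity.
  - rewrite act_word_app. simpl. rewrite IHu at 1. apply act1_word.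
Qed.

Lemma valid_app l rb : valid (l ++ rb) -> valid rb.
Proof. induction l; simpl; auto. intro H. apply valid_cons in H. tauto. Qed.

Lemma act_block b rb : valid (b :: rb) -> act_word (block_word b) (rb, 0%Z) = (b :: rb, 0%Z).
Proof.
  destruct b as [c i]. intro V. rewrite block_word_eq, act_word_app, act_rep. simpl.
  apply valid_cons in V. destruct V as [Hi [V Hg]]. apply block_ok_bnd in Hi.
  replace (act1 (tlet c) (rb, Z.of_nat i)) with (gstep c (rb, Z.of_nat i)) by (destruct c; reflexivity).
  unfold gstep. cbn [fst snd].
  destruct (divmod_uniq (Z.of_nat i) (Z.of_nat (bnd c)) 0 (Z.of_nat i) ltac:(lia) ltac:(ring)) as [D1 D2].
  rewrite D1, D2, Nat2Z.id, Z.mul_0_r.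
  destruct rb as [|[c' j] rb']. reflexivity.
  destruct (Bool.eqb c' c) eqn:Ec. reflexivity.
  destruct (Z.of_nat i =? 0)%Z eqn:Ei; [|reflexivity].
  exfalso. apply Hg. simpl. apply Z.eqb_eq in Ei. split. lia.
  destruct c, c'; simpl in *; congruence.
Qed.

Lemma act_blocks bs rb : valid (rev bs ++ rb) -> act_word (blocks_word bs) (rb, 0%Z) = (rev bs ++ rb, 0%Z).
Proof.
  revert rb. induction bs as [|b bs IH]; intros rb V. reflexivity.
  change (blocks_word (b :: bs)) with (block_word b ++ blocks_word bs).
  rewrite act_word_app. simpl rev in V |- *. rewrite <- app_assoc in V |- *. simpl in V |- *.
  rewrite act_block. apply IH. exact V. eapply valid_app. exact V.
Qed.

Lemma act_nf bs N : valid (rev bs) -> act_word (blocks_word bs ++ apow N) ([], 0%Z) = (rev bs, N).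
Proof.
  intro V. rewrite act_word_app. rewrite act_blocks by (rewrite app_nil_r; exact V).
  rewrite act_apow, app_nil_r. reflexivity.
Qed.
End BS.

Close Scope R_scope.


Lemma chain_snoc R l x y : chain R (l ++ [x; y]) <-> chain R (l ++ [x]) /\ R x y.
Proof.
  induction l as [|a l IH]. simpl. tauto.
  destruct l as [|b l]; simpl in *. tauto. rewrite IH. tauto.
Qed.

Lemma chain_rev R l : chain R (rev l) <-> chain (fun a b => R b a) l.
Proof.
  induction l as [|a l IH]. simpl; tauto.
  destruct l as [|b l]. simpl; tauto.
  simpl rev in *. rewrite <- app_assoc. simpl app at 2. rewrite chain_snoc, IH. simpl. tauto.
Qed.

Lemma fr_nil : freely_reduced [].
Proof. intros l r x y H. destruct l; discriminate. Qed.

Lemma fr_cons x u : freely_reduced (x :: u) <->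
  (match u with [] => True | y :: _ => y <> inv_letter x end) /\ freely_reduced u.
Proof.
  split.
  - intro H. split.
    + destruct u as [|y u]. auto. apply (H [] u x y). reflexivity.
    + intros l r a b E. apply (H (x :: l) r a b). rewrite E. reflexivity.
  - intros [H1 H2] l r a b E. destruct l as [|z l].
    + simpl in E. injection E. intros; subst. auto.
    + simpl in E. injection E. intros E' _. eapply H2. exact E'.
Qed.

Lemma fr_repA i c w : freely_reduced (repeat A i ++ tlet c :: w) <-> freely_reduced (tlet c :: w).
Proof.
  induction i. reflexivity.
  simpl. rewrite fr_cons, IHi. split. tauto. intro H. split; auto.
  destruct i; simpl. destruct c; discriminate. discriminate.
Qed.

Lemma fr_blocks bs : freely_reduced (blocks_word bs) <-> chain good bs.
Proof.
  induction bs as [|[c i] bs IH].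
  - simpl. split; auto. intros _. apply fr_nil.
  - change (blocks_word ((c, i) :: bs)) with (block_word (c, i) ++ blocks_word bs).
    rewrite block_word_eq, <- app_assoc. simpl. rewrite fr_repA, fr_cons, IH.
    destruct bs as [|[c' i'] bs']. simpl; tauto.
    change (blocks_word ((c', i') :: bs')) with (block_word (c', i') ++ blocks_word bs').
    rewrite block_word_eq, <- app_assoc. simpl.
    assert (Hh : (match repeat A i' ++ tlet c' :: blocks_word bs' with [] => True | y :: _ => y <> inv_letter (tlet c) end)
       <-> good (c, i) (c', i')).
    { unfold good. simpl. destruct i'; simpl.
      - destruct c, c'; simpl; split; intros H; try intuition congruence.
      - destruct c; simpl; split; intros; try discriminate; lia. }
    rewrite Hh. tauto.
Qed.

Close Scope R_scope.


Lemma valid_normal p q rb : valid p q rb -> normal_blocks p q (rev rb).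
Proof.
  intros [F C]. split. apply Forall_rev. exact F.
  apply fr_blocks. apply chain_rev. exact C.
Qed.

Lemma normal_valid p q bs : normal_blocks p q bs -> valid p q (rev bs).
Proof.
  intros [F C]. split. apply Forall_rev. exact F.
  apply fr_blocks in C. apply (chain_rev good (rev bs)). rewrite rev_involutive. exact C.
Qed.

Lemma part1 p q (hp : (1 <= p)%nat) (hpq : (p < q)%nat) (u : word) : exists! bN : list block * Z,
      normal_blocks p q (fst bN) /\ bs_eq p q u (blocks_word (fst bN) ++ apow (snd bN)).
Proof.
  assert (V0 : valid p q []) by (split; simpl; auto).
  exists (rev (fst (act_word p q u ([], 0%Z))), snd (act_word p q u ([], 0%Z))). split.
  - split. simpl. apply valid_normal. apply (act_word_valid p q hp hpq u ([],0%Z)). exact V0.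
    apply (nf_correct p q hp hpq).
  - intros [bs N] [Hn He]. simpl in *.
    rewrite (act_resp p q hp hpq _ _ He ([],0%Z) V0).
    rewrite (act_nf p q hp hpq) by (apply normal_valid; exact Hn). simpl. rewrite rev_involutive. reflexivity.
Qed.

Close Scope R_scope.


Lemma ln_le' x y : (0 < x)%R -> (x <= y)%R -> (ln x <= ln y)%R.
Proof. intros H1 H2. destruct (Rle_lt_or_eq_dec _ _ H2). left. apply ln_increasing; auto. right. subst; auto. Qed.

Lemma ln_ge0 x : (1 <= x)%R -> (0 <= ln x)%R.
Proof. intro H. rewrite <- ln_1. apply ln_le'; lra. Qed.

Section M.
Variables p q : nat.
Hypothesis hp : (1 <= p)%nat.
Hypothesis hpq : (p < q)%nat.

Lemma wl_exists u : exists n, is_word_length p q u n.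
Proof.
  assert (H : forall m, (exists v, bs_eq p q u v /\ length v = m) -> exists n, is_word_length p q u n).
  { intro m. induction m as [m IH] using (well_founded_induction lt_wf). intros Hm.
    destruct (classic (exists v, bs_eq p q u v /\ (length v < m)%nat)) as [[v [H1 H2]]|Hno].
    - apply (IH (length v) H2). exists v. auto.
    - exists m. split. exact Hm. intros v Hv. destruct (Nat.le_gt_cases m (length v)); auto.
      exfalso. apply Hno. exists v. auto. }
  apply (H (length u)). exists u. split. apply bs_refl. reflexivity.
Qed.

Lemma wlen_spec u : is_word_length p q u (wlen p q u).
Proof. unfold wlen. apply epsilon_spec. apply wl_exists. Qed.

Lemma wlen_le u v : bs_eq p q u v -> (wlen p q u <= length v)%nat.
Proof. intro H. apply (proj2 (wlen_spec u)). exact H. Qed.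

Lemma wlen_geo u : exists v, bs_eq p q u v /\ length v = wlen p q u.
Proof. apply (proj1 (wlen_spec u)). Qed.

Definition sg (s : bool) (n : nat) : Z := if s then Z.of_nat n else (- Z.of_nat n)%Z.

Fixpoint mkw (j : nat) (s : bool) (N : nat) : word :=
  match j with
  | O => apow (sg s N)
  | S j' => if (N <? q)%nat then apow (sg s N)
            else [T] ++ mkw j' s (p * (N / q)) ++ [Ti] ++ apow (sg s (N mod q))
  end.

Lemma length_apow z : length (apow z) = Z.to_nat (Z.abs z).
Proof. unfold apow. destruct (0 <=? z)%Z eqn:E; rewrite repeat_length.
  apply Z.leb_le in E. f_equal. lia. apply Z.leb_gt in E. f_equal. lia. Qed.

Lemma length_apow_sg s n : length (apow (sg s n)) = n.
Proof. rewrite length_apow. destruct s; simpl; lia. Qed.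

Lemma mkw_correct j s N : bs_eq p q (mkw j s N) (apow (sg s N)).
Proof.
  revert N. induction j as [|j IH]; intro N; simpl. reflexivity.
  destruct (N <? q)%nat eqn:E. reflexivity.
  rewrite IH.
  replace (sg s (p * (N / q))) with (Z.of_nat p * sg s (N / q))%Z by (destruct s; simpl; lia).
  transitivity (([T] ++ apow (Z.of_nat p * sg s (N / q)) ++ [Ti]) ++ apow (sg s (N mod q))).
  { simpl. rewrite <- app_assoc. reflexivity. }
  rewrite (conjT' p q hp hpq). rewrite (apow_add p q hp hpq).
  assert (Hd := Nat.div_mod N q ltac:(lia)).
  replace (Z.of_nat q * sg s (N / q) + sg s (N mod q))%Z with (sg s N). reflexivity.
  destruct s; simpl; lia.
Qed.

Lemma mkw_length j s N : (N * p ^ j < q ^ (S j))%nat -> (length (mkw j s N) <= (q + 2) * j + q)%nat.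
Proof.
  revert N. induction j as [|j IH]; intros N HN; simpl.
  - rewrite length_apow_sg. simpl in HN. lia.
  - destruct (N <? q)%nat eqn:E. rewrite length_apow_sg. apply Nat.ltb_lt in E. lia.
    apply Nat.ltb_ge in E.
    simpl length. rewrite !length_app. simpl length. rewrite length_apow_sg.
    assert (Hm := Nat.mod_upper_bound N q ltac:(lia)).
    assert (Hk : (p * (N / q) * p ^ j < q ^ S j)%nat).
    { assert (Hd := Nat.div_mod N q ltac:(lia)).
      assert (H1 : (q * (N / q) <= N)%nat) by lia.
      assert (H2 : (q * (p * (N / q) * p ^ j) < q * q ^ S j)%nat).
      { replace (q * (p * (N / q) * p ^ j))%nat with (q * (N / q) * p ^ S j)%nat by (simpl; ring).
        eapply Nat.le_lt_trans. apply Nat.mul_le_mono_r. exact H1.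
        simpl. simpl in HN. exact HN. }
      apply Nat.mul_lt_mono_pos_l in H2. exact H2. lia. }
    specialize (IH _ Hk). lia.
Qed.

Local Open Scope R_scope.

Lemma Lpos : 0 < ln (INR q) - ln (INR p).
Proof.
  assert (0 < INR p) by (apply lt_0_INR; lia). assert (INR p < INR q) by (apply lt_INR; lia).
  assert (ln (INR p) < ln (INR q)) by (apply ln_increasing; auto). lra.
Qed.

Lemma choose_j (n : nat) : exists j : nat, (n * p ^ j < q ^ S j)%nat /\
   INR j <= ln (INR n + 1) / (ln (INR q) - ln (INR p)) + 1.
Proof.
  set (L := ln (INR q) - ln (INR p)). assert (HL : 0 < L) by apply Lpos.
  assert (Hn1 : 1 <= INR n + 1) by (pose proof (pos_INR n); lra).
  set (x := ln (INR n + 1) / L).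
  assert (Hx : 0 <= x) by (unfold x, Rdiv; apply Rmult_le_pos; [apply ln_ge0; auto | left; apply Rinv_0_lt_compat; auto]).
  destruct (archimed x) as [A1 A2].
  assert (Hu : (0 <= up x)%Z) by (apply le_IZR; lra).
  exists (Z.to_nat (up x)).
  assert (Hj : INR (Z.to_nat (up x)) = IZR (up x)) by (rewrite INR_IZR_INZ, Z2Nat.id; auto).
  split; [|rewrite Hj; lra].
  set (j := Z.to_nat (up x)) in *.
  assert (Hp0 : 0 < INR p) by (apply lt_0_INR; lia).
  assert (Hq0 : 0 < INR q) by (apply lt_0_INR; lia).
  assert (Hlt : (INR n + 1) * INR p ^ j < INR q ^ j).
  { apply ln_lt_inv. apply Rmult_lt_0_compat. lra. apply pow_lt; auto. apply pow_lt; auto.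
    rewrite ln_mult, !ln_pow by (auto; try lra; apply pow_lt; auto).
    assert (x * L = ln (INR n + 1)) by (unfold x; field; lra).
    assert (x * L < INR j * L) by (apply Rmult_lt_compat_r; lra).
    unfold L in *. nra. }
  apply INR_lt. rewrite mult_INR, !pow_INR. simpl.
  assert (1 <= INR q) by (apply (le_INR 1); lia).
  assert (0 <= INR q ^ j) by (apply pow_le; lra).
  assert (0 < INR p ^ j) by (apply pow_lt; lra).
  nra.
Qed.

Lemma apow_short (N : Z) : exists v, bs_eq p q (apow N) v /\
  INR (length v) <= (INR q + 2) / (ln (INR q) - ln (INR p)) * ln (IZR (Z.abs N) + 1) + 2 * INR q + 2.
Proof.
  set (n := Z.to_nat (Z.abs N)). set (s := (0 <=? N)%Z).
  assert (Hs : sg s n = N) by (unfold sg, s, n; destruct (0 <=? N)%Z eqn:E;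
     [apply Z.leb_le in E | apply Z.leb_gt in E]; lia).
  assert (Hn : IZR (Z.abs N) = INR n) by (unfold n; rewrite INR_IZR_INZ, Z2Nat.id; auto; lia).
  destruct (choose_j n) as [j [H1 H2]].
  exists (mkw j s n). split. rewrite mkw_correct, Hs. reflexivity.
  pose proof (mkw_length j s n H1) as H3. apply le_INR in H3.
  rewrite plus_INR, mult_INR, plus_INR in H3. simpl in H3.
  rewrite Hn. assert (HL := Lpos).
  set (L := ln (INR q) - ln (INR p)) in *.
  assert (0 <= INR q) by apply pos_INR.
  assert (INR j * (INR q + 2) <= (ln (INR n + 1) / L + 1) * (INR q + 2)) by (apply Rmult_le_compat_r; lra).
  replace ((INR q + 2) / L * ln (INR n + 1)) with (ln (INR n + 1) / L * (INR q + 2)) by (field; lra).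
  simpl in H3. nra.
Qed.
End M.

Close Scope R_scope.


Lemma abs_div (N m : Z) : (0 < m)%Z -> (Z.abs (N / m) <= Z.abs N)%Z.
Proof.
  intro Hm. assert (E := Z.div_mod N m ltac:(lia)). assert (B := Z.mod_pos_bound N m Hm).
  set (k := (N / m)%Z) in *. set (r := (N mod m)%Z) in *. clearbody k r.
  destruct (Z.le_gt_cases 0 k); nia.
Qed.

Section G.
Variables p q : nat.
Hypothesis hp : (1 <= p)%nat.
Hypothesis hpq : (p < q)%nat.

Lemma gstep_growth c rb N : valid p q rb ->
  (length (fst (gstep p q c (rb, N))) <= S (length rb))%nat /\
  (Z.abs (snd (gstep p q c (rb, N))) + 1 <= Z.of_nat (S q) * (Z.abs N + 1))%Z.
Proof.
  intro V. unfold gstep. cbn [fst snd].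
  pose proof (bnd_pos p q hp hpq c) as Hc. pose proof (bnd_pos p q hp hpq (negb c)) as Hn.
  assert (Hnq : (bnd p q (negb c) <= q)%nat) by (destruct c; simpl; lia).
  set (m := Z.of_nat (bnd p q c)) in *. set (n := Z.of_nat (bnd p q (negb c))) in *.
  assert (Hk := abs_div N m ltac:(lia)).
  set (k := (N / m)%Z) in *. set (i := (N mod m)%Z) in *. clearbody k i.
  assert (Happ : (Z.abs (n * k) + 1 <= Z.of_nat (S q) * (Z.abs N + 1))%Z) by nia.
  assert (R1 : (Z.of_nat (S q) * (Z.abs N + 1) = Z.of_nat q * (Z.abs N + 1) + Z.abs N + 1)%Z) by (rewrite Nat2Z.inj_succ; ring).
  set (BB := (Z.of_nat (S q) * (Z.abs N + 1))%Z) in *.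
  destruct rb as [|[c' j] rb'].
  - simpl. split. lia. exact Happ.
  - destruct (Bool.eqb c' c) eqn:Ec. simpl. split. lia. exact Happ.
    destruct (i =? 0)%Z. 2:{ simpl. split. lia. exact Happ. }
    simpl. split. lia.
    assert (c' = negb c) by (destruct c, c'; simpl in *; congruence). subst c'.
    apply valid_cons in V. destruct V as [Hj _]. apply block_ok_bnd in Hj.
    assert (Hj' : (0 <= Z.of_nat j < n)%Z) by lia.
    assert (Ha : (Z.abs (n * k) = n * Z.abs k)%Z) by (rewrite Z.abs_mul; f_equal; lia).
    assert (Hb : (Z.abs (Z.of_nat j + n * k) <= Z.of_nat j + Z.abs (n * k))%Z) by lia.
    assert (Hc2 : (n * Z.abs k <= n * Z.abs N)%Z) by (apply Z.mul_le_mono_nonneg_l; lia).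
    assert (Hq' : (n <= Z.of_nat q)%Z) by lia.
    assert (Hq2 : (n * (Z.abs N + 1) <= Z.of_nat q * (Z.abs N + 1))%Z) by (apply Z.mul_le_mono_nonneg_r; lia).
    assert (R2 : (n * (Z.abs N + 1) = n * Z.abs N + n)%Z) by ring.
    lia.
Qed.

Lemma act1_growth x rb N : valid p q rb ->
  (length (fst (act1 p q x (rb, N))) <= S (length rb))%nat /\
  (Z.abs (snd (act1 p q x (rb, N))) + 1 <= Z.of_nat (S q) * (Z.abs N + 1))%Z.
Proof.
  intro V. destruct x; cbn [act1 fst snd].
  - split. lia. rewrite Nat2Z.inj_succ. nia.
  - split. lia. rewrite Nat2Z.inj_succ. nia.
  - apply gstep_growth; auto.
  - apply gstep_growth; auto.
Qed.

Lemma act_growth v : forall rb N, valid p q rb ->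
  (length (fst (act_word p q v (rb, N))) <= length rb + length v)%nat /\
  (Z.abs (snd (act_word p q v (rb, N))) + 1 <= (Z.abs N + 1) * Z.of_nat (S q ^ length v))%Z.
Proof.
  induction v as [|x v IH]; intros rb N V.
  - simpl. split; lia.
  - simpl act_word. destruct (act1 p q x (rb, N)) as [rb1 N1] eqn:E.
    pose proof (act1_growth x rb N V) as [G1 G2]. rewrite E in G1, G2. cbn [fst snd] in G1, G2.
    assert (V1 : valid p q rb1).
    { pose proof (act1_valid p q hp hpq x (rb, N) V) as H. rewrite E in H. exact H. }
    destruct (IH rb1 N1 V1) as [H1 H2].
    split. simpl length. lia.
    simpl length. rewrite Nat.pow_succ_r', Nat2Z.inj_mul.
    assert (0 <= Z.of_nat (S q ^ length v))%Z by apply Nat2Z.is_nonneg. nia.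
Qed.

Lemma blocks_len bs : Forall (block_ok p q) bs -> (length (blocks_word bs) <= q * length bs)%nat.
Proof.
  induction 1 as [|[c i] bs Hb F IH]. simpl. lia.
  change (blocks_word ((c, i) :: bs)) with (block_word (c, i) ++ blocks_word bs).
  rewrite length_app, block_word_eq, length_app, repeat_length. simpl length.
  apply block_ok_bnd in Hb. destruct c; simpl in Hb; nia.
Qed.
End G.

Open Scope R_scope.


Theorem theorem3p2 (p q : nat) (hp : (1 <= p)%nat) (hpq : (p < q)%nat) :
  (forall u : word, exists! bN : list block * Z,
      normal_blocks p q (fst bN) /\ bs_eq p q u (blocks_word (fst bN) ++ apow (snd bN)))
  /\
  exists C1 C2 D1 D2 : R, 0 < C1 /\ 0 < C2 /\ 0 < D1 /\ 0 < D2 /\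
    forall (bs : list block) (N : Z), normal_blocks p q bs ->
      C1 * (INR (length (blocks_word bs)) + ln (IZR (Z.abs N) + 1)) - D1
        <= INR (wlen p q (blocks_word bs ++ apow N)) /\
      INR (wlen p q (blocks_word bs ++ apow N))
        <= C2 * (INR (length (blocks_word bs)) + ln (IZR (Z.abs N) + 1)) + D2.
Proof.
  split. { intro u. apply part1; auto. }
  assert (HL := Lpos p q hp hpq).
  set (L := ln (INR q) - ln (INR p)) in *.
  assert (Hq1 : 1 <= INR q) by (apply (le_INR 1); lia).
  assert (HB : 0 < ln (INR (S q))).
  { rewrite <- ln_1. apply ln_increasing. lra. rewrite S_INR. lra. }
  set (lB := ln (INR (S q))) in *.
  exists (/ (INR q + lB)), (1 + (INR q + 2) / L), 1, (2 * INR q + 3).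
  assert (HK : 0 <= (INR q + 2) / L) by (unfold Rdiv; apply Rmult_le_pos; [lra | left; apply Rinv_0_lt_compat; lra]).
  split. apply Rinv_0_lt_compat. lra.
  split. lra. split. lra. split. lra.
  intros bs N Hn.
  set (x := blocks_word bs ++ apow N).
  assert (Hw0 : 0 <= INR (length (blocks_word bs))) by apply pos_INR.
  assert (HN1 : 1 <= IZR (Z.abs N) + 1) by (assert (0 <= IZR (Z.abs N)) by (apply IZR_le; lia); lra).
  assert (Hl0 : 0 <= ln (IZR (Z.abs N) + 1)) by (apply ln_ge0; auto).
  split.
  - destruct (wlen_geo p q x) as [v [Hv Hlen]].
    assert (V0 : valid p q []) by (split; simpl; auto).
    assert (E1 : act_word p q x ([], 0%Z) = (rev bs, N)).
    { apply (act_nf p q hp hpq). apply normal_valid. exact Hn. }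
    rewrite (act_resp p q hp hpq _ _ Hv ([], 0%Z) V0) in E1.
    destruct (act_growth p q hp hpq v [] 0%Z V0) as [G1 G2].
    rewrite E1 in G1, G2. cbn [fst snd] in G1, G2. rewrite length_rev in G1. simpl in G1.
    rewrite Hlen in G1, G2. set (n := wlen p q x) in *.
    assert (Hwb := blocks_len p q hp hpq bs (proj1 Hn)).
    assert (Hw : INR (length (blocks_word bs)) <= INR q * INR n).
    { rewrite <- mult_INR. apply le_INR. nia. }
    assert (Hln : ln (IZR (Z.abs N) + 1) <= INR n * lB).
    { unfold lB. rewrite <- ln_pow by (apply lt_0_INR; lia). apply ln_le'. lra.
      rewrite <- pow_INR, INR_IZR_INZ. rewrite <- plus_IZR. apply IZR_le. lia. }
    assert (Hpos : 0 < INR q + lB) by lra.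
    assert (H3 : INR (length (blocks_word bs)) + ln (IZR (Z.abs N) + 1) <= INR n * (INR q + lB)) by nra.
    assert (H4 : / (INR q + lB) * (INR (length (blocks_word bs)) + ln (IZR (Z.abs N) + 1)) <= INR n).
    { replace (INR n) with (/ (INR q + lB) * (INR n * (INR q + lB))) by (field; lra).
      apply Rmult_le_compat_l. left. apply Rinv_0_lt_compat. lra. exact H3. }
    lra.
  - destruct (apow_short p q hp hpq N) as [v [Hv Hlen]].
    assert (H1 : (wlen p q x <= length (blocks_word bs ++ v))%nat).
    { apply wlen_le. unfold x. rewrite Hv. reflexivity. }
    apply le_INR in H1. rewrite length_app, plus_INR in H1. fold L in Hlen.
    nra.
Qed.
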